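(* In the $E$-generic bisimulation game on an LTS $L=\langle S,A,\to\rangle$ (for any $E\subseteq\{\frown,\smile\}$), the configurations $\langle (s,t),c,m,*\rangle_S$ and $\langle (s,t),c,m,\checkmark\rangle_S$ are won by the same player, and so are $\langle (s,t),c,m,*\rangle_D$ and $\langle (s,t),c,m,\checkmark\rangle_D$.
   Context: An LTS is $\langle S,A,\to\rangle$ with states $S$, actions $A$ containing the internal action $\tau$, and $\to\subseteq S\times A\times S$; write $s\xrightarrow{a}t$. Generic bisimulation game. Let $\frown,\smile$ be formal tags and $E\subseteq\{\frown,\smile\}$. Spoiler-owned configurations $\langle (s,t),c,m,r\rangle_S$ and Duplicator-owned $\langle (s,t),c,m,r\rangle_D$ have $(s,t)\in S\times S$, $c\in (A\times S)\cup\{\dagger\}$, $m\in (S\times\{\frown,\smile\})\cup\{\dagger\}$, $r\in\{*,\checkmark\}$. From $\langle (s,t),c,m,r\rangle_S$ Spoiler may: (S1) move to $\langle (s,t),c,m,*\rangle_D$ if $c\neq\dagger$; (S2a) for some $s\xrightarrow{a}s'$, move to $\langle (s,t),(a,s'),(t,\frown),*\rangle_D$ if $c=\dagger$; (S2b) for some $s\xrightarrow{a}s'$, move to $\langle (s,t),(a,s'),(t,\frown),\checkmark\rangle_D$ if $c\neq (a,s')$; (S3) for some $t\xrightarrow{a}t'$, move to $\langle (t,s),(a,t'),(s,\frown),\checkmark\rangle_D$. From $\langle (u,v),(a,u'),(\bar v,f),r\rangle_D$ Duplicator may: (D1) move to $\langle (u',\bar v),\dagger,\dagger,\checkmark\rangle_S$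 if $a=\tau$; (D2) if $f=\frown$ and $\bar v\xrightarrow{a}v'$: (a) move to $\langle (u',v'),(a,u'),(v',\smile),*\rangle_S$, or (b) move to $\langle (u',v'),\dagger,\dagger,\checkmark\rangle_S$, or (c) only if $\smile\in E$, move to $\langle (u,v),(a,u'),(v',\smile),*\rangle_S$; (D3) for some $\bar v\xrightarrow{\tau}v'$: (a) move to $\langle (u,v'),(a,u'),(v',f),*\rangle_S$, or (b) only if $f=\smile$, move to $\langle (u',v'),\dagger,\dagger,\checkmark\rangle_S$, or (c) only if $f\in E$, move to $\langle (u,v),(a,u'),(v',f),*\rangle_S$. Duplicator wins a finite play if Spoiler gets stuck, and an infinite play if it has infinitely many $\checkmark$ rewards; other plays are won by Spoiler. A player wins a configuration if she has a strategy winning all plays starting in it. *)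

(* Defs.v *)
From Stdlib Require Import List.
Import ListNotations.

Inductive player := Spoiler | Duplicator.
Inductive tag := Frown | Smile.

Section Game.
Variables (St A : Type) (tau : A) (trans : St -> A -> St -> Prop).
Variable E : tag -> Prop.

(* A configuration <(s,t), c, m, r>_owner.
   cur = None encodes c = †, mem = None encodes m = †,
   rew = true encodes r = ✓, rew = false encodes r = *. *)
Record config := Config {
  owner : player;
  pos : St * St;
  cur : option (A * St);
  mem : option (St * tag);
  rew : bool }.

Inductive move : config -> config -> Prop :=
| S1 : forall s t c m r, c <> None ->
    move (Config Spoiler (s,t) c m r) (Config Duplicator (s,t) c m false)
| S2a : forall s t m r a s', trans s a s' ->
    move (Config Spoiler (s,t) None m r)
         (Config Duplicator (s,t) (Some (a,s')) (Some (t,Frown)) false)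
| S2b : forall s t c m r a s', trans s a s' -> c <> Some (a,s') ->
    move (Config Spoiler (s,t) c m r)
         (Config Duplicator (s,t) (Some (a,s')) (Some (t,Frown)) true)
| S3 : forall s t c m r a t', trans t a t' ->
    move (Config Spoiler (s,t) c m r)
         (Config Duplicator (t,s) (Some (a,t')) (Some (s,Frown)) true)
| D1 : forall u v a u' vb f r, a = tau ->
    move (Config Duplicator (u,v) (Some (a,u')) (Some (vb,f)) r)
         (Config Spoiler (u',vb) None None true)
| D2a : forall u v a u' vb r v', trans vb a v' ->
    move (Config Duplicator (u,v) (Some (a,u')) (Some (vb,Frown)) r)
         (Config Spoiler (u',v') (Some (a,u')) (Some (v',Smile)) false)
| D2b : forall u v a u' vb r v', trans vb a v' ->
    move (Config Duplicator (u,v) (Some (a,u')) (Some (vb,Frown)) r)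
         (Config Spoiler (u',v') None None true)
| D2c : forall u v a u' vb r v', trans vb a v' -> E Smile ->
    move (Config Duplicator (u,v) (Some (a,u')) (Some (vb,Frown)) r)
         (Config Spoiler (u,v) (Some (a,u')) (Some (v',Smile)) false)
| D3a : forall u v a u' vb f r v', trans vb tau v' ->
    move (Config Duplicator (u,v) (Some (a,u')) (Some (vb,f)) r)
         (Config Spoiler (u,v') (Some (a,u')) (Some (v',f)) false)
| D3b : forall u v a u' vb r v', trans vb tau v' ->
    move (Config Duplicator (u,v) (Some (a,u')) (Some (vb,Smile)) r)
         (Config Spoiler (u',v') None None true)
| D3c : forall u v a u' vb f r v', trans vb tau v' -> E f ->
    move (Config Duplicator (u,v) (Some (a,u')) (Some (vb,f)) r)
         (Config Spoiler (u,v) (Some (a,u')) (Some (v',f)) false).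

Definition stuck (x : config) : Prop := forall y, ~ move x y.

Definition strategy := list config -> config -> config.

Definition valid_strategy (P : player) (sigma : strategy) : Prop :=
  forall h x, owner x = P -> (exists y, move x y) -> move x (sigma h x).

Definition infinite_play (p : config) (f : nat -> config) : Prop :=
  f 0 = p /\ forall n, move (f n) (f (S n)).

Definition inf_consistent (P : player) (sigma : strategy) (f : nat -> config) : Prop :=
  forall n, owner (f n) = P -> f (S n) = sigma (map f (seq 0 n)) (f n).

Definition finite_play (p : config) (n : nat) (g : nat -> config) : Prop :=
  g 0 = p /\ (forall i, i < n -> move (g i) (g (S i))) /\ stuck (g n).

Definition fin_consistent (P : player) (sigma : strategy) (n : nat) (g : nat -> config) : Prop :=
  forall i, i < n -> owner (g i) = P -> g (S i) = sigma (map g (seq 0 i)) (g i).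

Definition inf_many_checks (f : nat -> config) : Prop :=
  forall N, exists n, N <= n /\ rew (f n) = true.

Definition wins_infinite (P : player) (f : nat -> config) : Prop :=
  match P with
  | Duplicator => inf_many_checks f
  | Spoiler => ~ inf_many_checks f
  end.

Definition wins_finite (P : player) (n : nat) (g : nat -> config) : Prop :=
  owner (g n) <> P.

Definition wins (P : player) (p : config) : Prop :=
  exists sigma, valid_strategy P sigma /\
    (forall f, infinite_play p f -> inf_consistent P sigma f -> wins_infinite P f) /\
    (forall n g, finite_play p n g -> fin_consistent P sigma n g -> wins_finite P n g).

End Game.

(* Main.v *)
Require Import Defs.
From Stdlib Require Import List Arith Lia.
Import ListNotations.

Section Aux.
Variables (St A : Type) (tau : A) (trans : St -> A -> St -> Prop) (E : tag -> Prop).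

Lemma move_rew o ps c m r r' y :
  move St A tau trans E (Config St A o ps c m r) y ->
  move St A tau trans E (Config St A o ps c m r') y.
Proof.
  intro H; inversion H; subst; econstructor; eauto.
Qed.

Lemma transfer P o ps c m b b' :
  wins St A tau trans E P (Config St A o ps c m b) ->
  wins St A tau trans E P (Config St A o ps c m b').
Proof.
  set (p := Config St A o ps c m b). set (p' := Config St A o ps c m b').
  intros [sigma [Hv [Hinf Hfin]]].
  set (chg := fun x : config St A => Config St A (owner St A x) (pos St A x) (cur St A x) (mem St A x) b).
  assert (Hchg : forall x y, move St A tau trans E x y <-> move St A tau trans E (chg x) y).
  { intros [ox px cx mx rx] y; simpl; split; apply move_rew. }
  exists (fun h x => match h with [] => sigma [] (chg x) | _ :: h' => sigma (p :: h') x end).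
  assert (Hp : chg p' = p) by reflexivity.
  split; [|split].
  - intros h x Ho [y Hy]. destruct h as [|z h'].
    + apply (proj2 (Hchg _ _)). apply Hv; [exact Ho|]. exists y. exact (proj1 (Hchg _ _) Hy).
    + exact (Hv _ _ Ho (ex_intro _ y Hy)).
  - intros f' [H0 Hm] Hc.
    set (f := fun n => match n with 0 => p | S k => f' (S k) end).
    assert (Hmap : forall k, map f (seq 1 k) = map f' (seq 1 k)).
    { intro k. apply map_ext_in. intros a Ha. apply in_seq in Ha.
      destruct a; [lia|reflexivity]. }
    assert (Hw : wins_infinite St A P f).
    { apply Hinf.
      - split; [reflexivity|]. intro n. destruct n.
        + simpl. specialize (Hm 0). rewrite H0 in Hm. apply Hchg in Hm. exact Hm.
        + apply Hm.
      - intros n Ho. destruct n.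
        + simpl. rewrite (Hc 0); [|simpl in *; rewrite H0; exact Ho].
          simpl. rewrite H0. reflexivity.
        + change (f (S (S n))) with (f' (S (S n))).
          rewrite (Hc (S n)); [|exact Ho].
          change (seq 0 (S n)) with (0 :: seq 1 n). simpl map.
          rewrite Hmap. reflexivity. }
    destruct P; simpl in *; unfold inf_many_checks in *.
    + intro Hn; apply Hw. intro N. destruct (Hn (S N)) as [k [Hk Hr]].
      exists k. split; [lia|]. destruct k; [lia|exact Hr].
    + intro N. destruct (Hw (S N)) as [k [Hk Hr]].
      exists k. split; [lia|]. destruct k; [lia|exact Hr].
  - intros n g' [H0 [Hm Hs]] Hc.
    set (g := fun n => match n with 0 => p | S k => g' (S k) end).
    assert (Hmap : forall k, map g (seq 1 k) = map g' (seq 1 k)).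
    { intro k. apply map_ext_in. intros a Ha. apply in_seq in Ha.
      destruct a; [lia|reflexivity]. }
    assert (Hw : wins_finite St A P n g).
    { apply Hfin.
      - split; [reflexivity|split].
        + intros i Hi. destruct i.
          * simpl. specialize (Hm 0 Hi). rewrite H0 in Hm. apply Hchg in Hm. exact Hm.
          * apply Hm; exact Hi.
        + destruct n.
          * intros y Hy. apply (Hs y). rewrite H0. apply Hchg. exact Hy.
          * exact Hs.
      - intros i Hi Ho. destruct i.
        + simpl. rewrite (Hc 0 Hi); [|simpl in *; rewrite H0; exact Ho].
          simpl. rewrite H0. reflexivity.
        + change (g (S (S i))) with (g' (S (S i))).
          rewrite (Hc (S i) Hi); [|exact Ho].
          change (seq 0 (S i)) with (0 :: seq 1 i). simpl map.
          rewrite Hmap. reflexivity. }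
    unfold wins_finite in *. destruct n; [rewrite H0; exact Hw | exact Hw].
Qed.
End Aux.

Theorem proposition5p7 :
  forall (St A : Type) (tau : A) (trans : St -> A -> St -> Prop) (E : tag -> Prop)
    (s t : St) (c : option (A * St)) (m : option (St * tag)) (P : player),
    (@wins St A tau trans E P (@Config St A Spoiler (s,t) c m false)
       <-> @wins St A tau trans E P (@Config St A Spoiler (s,t) c m true)) /\
    (@wins St A tau trans E P (@Config St A Duplicator (s,t) c m false)
       <-> @wins St A tau trans E P (@Config St A Duplicator (s,t) c m true)).
Proof.
  intros; split; split; apply transfer.
Qed.
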